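(* Let $d=2n$ be even, $\omega=e^{2\pi i/d}$, and $F_d=(\omega^{jk})_{j,k=0}^{d-1}$ the Fourier matrix. For $\vec\xi=(\xi_1,\dots,\xi_{n-1})\in\mathbb{R}^{n-1}$ define the real $d\times d$ matrix $R(\vec\xi)$ by $R(\vec\xi)_{j,k}=0$ if $j$ is even, $R(\vec\xi)_{j,k}=0$ if $j$ is odd and $k\equiv0\pmod n$, and $R(\vec\xi)_{j,k}=\xi_{(k \bmod n)}$ otherwise (where $k\bmod n\in\{1,\dots,n-1\}$). Then for every $\vec\xi$ both $F_d\circ\exp(iR(\vec\xi))$ and $F_d\circ\exp(iR(\vec\xi)^t)$ are complex Hadamard matrices.
   Context: A $d\times d$ complex Hadamard matrix has unimodular entries and pairwise orthogonal columns. $\circ$ denotes the entrywise product and $\exp(iR)$ the entrywise exponential $(\exp(iR))_{jk}=e^{iR_{jk}}$; rows and columns are indexed $0,\dots,d-1$. *)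

(* Defs.v *)
From HB Require Import structures.
From mathcomp Require Import all_boot all_order all_algebra.
From mathcomp Require Import complex.
From mathcomp Require Import reals trigo.
Set Implicit Arguments. Unset Strict Implicit. Unset Printing Implicit Defensive.
Import Order.TTheory GRing.Theory Num.Theory.
Local Open Scope ring_scope.
Local Open Scope complex_scope.

Definition expi (R : realType) (x : R) : R[i] := (cos x +i* sin x)%C.

Definition is_complex_hadamard (R : realType) (d : nat) (H : 'M[R[i]]_d) : Prop :=
  (forall j k, `|H j k| = 1) /\
  (forall k l : 'I_d, k != l -> \sum_(j < d) H j k * (H j l)^* = 0).

Definition fourier_mx (R : realType) (d : nat) : 'M[R[i]]_d :=
  \matrix_(j < d, k < d) (expi (2 * pi / d%:R : R)) ^+ (j * k).

Definition hadamard_exp (R : realType) (d : nat) (A : 'M[R[i]]_d) (B : 'M[R]_d)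
  : 'M[R[i]]_d := \matrix_(j, k) (A j k * expi (B j k)).

(* R(xi) for d = 2n; xi is given as a function on indices, only xi_1..xi_{n-1} used *)
Definition Rxi (R : realType) (n : nat) (xi : nat -> R) : 'M[R]_(n.*2) :=
  \matrix_(j, k) (if ~~ odd j then 0
                  else if (k %% n == 0)%N then 0 else xi (k %% n)%N).

(* Main.v *)
Require Import Defs.
From HB Require Import structures.
From mathcomp Require Import all_boot all_order all_algebra.
From mathcomp Require Import complex.
From mathcomp Require Import reals trigo.
From mathcomp Require Import ring lra zify.
Set Implicit Arguments. Unset Strict Implicit. Unset Printing Implicit Defensive.
Import Order.TTheory GRing.Theory Num.Theory.
Local Open Scope ring_scope.


Section S.
Variable R : realType.
Implicit Types x y : R.

Lemma expiD x y : expi (x + y) = expi x * expi y.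
Proof.
rewrite /expi cosD sinD.
apply/eqP; rewrite eq_complex /=; apply/andP; split; apply/eqP; ring.
Qed.

Lemma expi0 : expi (0:R) = 1.
Proof. by rewrite /expi cos0 sin0. Qed.

Lemma expiX x k : expi x ^+ k = expi (k%:R * x).
Proof.
elim: k => [|k IH]; first by rewrite expr0 mul0r expi0.
by rewrite exprS IH -expiD -{1}(mul1r x) -mulrDl -natr1 addrC.
Qed.

Lemma expiJ x : (expi x)^* = expi (- x).
Proof. by rewrite /expi cosN sinN. Qed.

Lemma norm_expi x : `|expi x| = 1.
Proof.
by rewrite normc_def /= cos2Dsin2 sqrtr1.
Qed.

Lemma expi_neq1 y : 0 < y < pi -> expi (y + y) != 1.
Proof.
move=> hy; apply/negP => /eqP/eqP; rewrite eq_complex /= => /andP [/eqP hc /eqP hs].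
have sy := sin_gt0_pi hy.
move: hs; rewrite sinD => hs.
move: hc; rewrite cosD => hc.
have : sin y ^+ 2 = 0.
  have := cos2Dsin2 y. nra.
move/eqP; rewrite sqrf_eq0 => /eqP h; by rewrite h ltxx in sy.
Qed.

Lemma geom0 (z : R[i]) N : z ^+ N = 1 -> z != 1 -> \sum_(i < N) z ^+ i = 0.
Proof.
move=> hN hz.
have := subrX1 z N. rewrite hN subrr => /esym /eqP; rewrite mulf_eq0 subr_eq0 (negbTE hz) /=.
by move/eqP.
Qed.

Variable n : nat.
Hypothesis hn : (0 < n)%N.
Let th : R := 2 * pi / (n.*2)%:R.
Let w := expi th.

Lemma wn : w ^+ n = -1.
Proof.
rewrite /w expiX /th.
have -> : n%:R * (2 * pi / (n.*2)%:R) = pi :> R.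
  rewrite -muln2 natrM; field.
  by rewrite pnatr_eq0 -lt0n hn.
by rewrite /expi cospi sinpi; apply/eqP; rewrite eq_complex /= ?oppr0 !eqxx.
Qed.

Lemma w2n : w ^+ n.*2 = 1.
Proof. by rewrite -addnn exprD wn mulrNN mulr1. Qed.

Lemma wneq1 s : (s %% n.*2 != 0)%N -> w ^+ s != 1.
Proof.
move=> hs.
rewrite {1}(divn_eq s n.*2) exprD mulnC exprM w2n expr1n mul1r.
set r := (s %% n.*2)%N in hs *.
have hr : (r < n.*2)%N by rewrite ltn_mod double_gt0.
rewrite /w expiX.
have -> : r%:R * th = ((r%:R * pi / (n.*2)%:R) + (r%:R * pi / (n.*2)%:R) : R).
  rewrite /th; field. by rewrite pnatr_eq0 double_eq0 -lt0n hn.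
apply: expi_neq1.
have n2 : (0 : R) < (n.*2)%:R by rewrite ltr0n double_gt0.
apply/andP; split.
  apply: divr_gt0 => //; apply: mulr_gt0; last exact: pi_gt0.
  by rewrite ltr0n lt0n.
by rewrite ltr_pdivrMr // mulrC ltr_pM2l ?pi_gt0 // ltr_nat.
Qed.
Local Notation H B := (hadamard_exp (fourier_mx R n.*2) B).

Lemma had_entry (B : 'M[R]_(n.*2)) j k : H B j k = w ^+ (j * k) * expi (B j k).
Proof. by rewrite !mxE. Qed.

Lemma had_norm B j k : `|H B j k| = 1.
Proof. by rewrite had_entry normrM normrX /w !norm_expi expr1n mulr1. Qed.

Lemma had_sum B (k l : 'I_n.*2) : (l <= k)%N ->
  \sum_(j < n.*2) H B j k * (H B j l)^* =
  \sum_(j < n.*2) w ^+ (j * (k - l)) * expi (B j k - B j l).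
Proof.
move=> lk; apply: eq_bigr => j _.
rewrite !had_entry /w !expiX -!expiD expiJ -expiD; congr expi.
rewrite mulnBr natrB ?leq_mul2l ?lk ?orbT //.
rewrite !natrM; ring.
Qed.

Lemma orth_wlog (M : 'M[R[i]]_(n.*2)) :
  (forall k l : 'I_n.*2, (l < k)%N -> \sum_(j < n.*2) M j k * (M j l)^* = 0) ->
  forall k l : 'I_n.*2, k != l -> \sum_(j < n.*2) M j k * (M j l)^* = 0.
Proof.
move=> Hlt k l; rewrite neq_ltn => /orP [kl|lk]; last exact: Hlt.
transitivity (Num.conj (\sum_(j < n.*2) M j l * (M j k)^*)); last by rewrite Hlt // conjC0.
rewrite rmorph_sum; apply: eq_bigr => j _; by rewrite rmorphM /= conjCK mulrC.
Qed.
Lemma sum_even_odd (F : nat -> R[i]) n' :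
  \sum_(j < n'.*2) F j = \sum_(t < n') (F t.*2 + F t.*2.+1).
Proof.
elim: n' => [|m IH]; first by rewrite !big_ord0.
by rewrite doubleS !big_ord_recr /= IH -addrA.
Qed.

Lemma sum_halves (F : nat -> R[i]) n' :
  \sum_(j < n'.*2) F j = \sum_(t < n') (F t + F (t + n')%N).
Proof.
rewrite -addnn big_split_ord big_split /=; congr (_ + _).
by apply: eq_bigr => i _; rewrite addnC.
Qed.

Variable xi : nat -> R.
Let X := fun k : nat => if (k %% n == 0)%N then 0 else xi (k %% n).

Lemma XD k : X (k + n) = X k.
Proof. by rewrite /X modnDr. Qed.

Lemma case1 (k l : 'I_n.*2) : (l < k)%N ->
  \sum_(j < n.*2) H (Rxi n xi) j k * (H (Rxi n xi) j l)^* = 0.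
Proof.
move=> lk; rewrite had_sum; last exact: ltnW.
have hk := ltn_ord k.
pose m := (k - l)%N. pose c := X k - X l.
have hm0 : (0 < m)%N by rewrite subn_gt0.
have hm : (m < n.*2)%N by rewrite /m; lia.
transitivity (\sum_(j < n.*2) (fun j : nat => w ^+ (j * m) * expi (if ~~ odd j then 0 else c)) j).
  apply: eq_bigr => j _; rewrite !mxE /=; by case: (odd j); rewrite ?subrr.
rewrite (sum_even_odd (fun j : nat => w ^+ (j * m) * expi (if ~~ odd j then 0 else c))).
transitivity (\sum_(t < n) (w ^+ m.*2) ^+ t * (1 + w ^+ m * expi c)).
  apply: eq_bigr => t _ /=; rewrite odd_double /= expi0 mulr1.
  rewrite -exprM mulrDr mulr1 mulrA -exprD; congr (w ^+ _ + w ^+ _ * _); lia.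
rewrite -mulr_suml.
case: (eqVneq m n) => [mn | mn].
  have -> : c = 0.
    rewrite /c (_ : nat_of_ord k = l + n)%N ?XD ?subrr //.
    by move: mn; rewrite /m; lia.
  by rewrite expi0 mulr1 mn wn subrr mulr0.
rewrite geom0 ?mul0r //.
  rewrite -exprM (_ : (m.*2 * n = n.*2 * m)%N); first by rewrite exprM w2n expr1n.
  lia.
apply: wneq1. clearbody m.
case: (ltngtP m n) => h; last by rewrite h eqxx in mn.
  by rewrite modn_small ?ltn_double // double_eq0 -lt0n.
have -> : m.*2 = (n.*2 + (m - n).*2)%N by rewrite -doubleD subnKC // ltnW.
rewrite modnDl modn_small ?double_eq0 -?lt0n ?subn_gt0 // ltn_double.
clear -hm h; lia.
Qed.


Lemma case2 (k l : 'I_n.*2) : (l < k)%N ->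
  \sum_(j < n.*2) H (Rxi n xi)^T j k * (H (Rxi n xi)^T j l)^* = 0.
Proof.
move=> lk; rewrite had_sum; last exact: ltnW.
have hk := ltn_ord k.
pose m := (k - l)%N.
have hm0 : (0 < m)%N by rewrite subn_gt0.
have hm : (m < n.*2)%N by rewrite /m; lia.
pose Y := fun j : nat => (if ~~ odd k then 0 else X j) - (if ~~ odd l then 0 else X j).
transitivity (\sum_(j < n.*2) (fun j : nat => w ^+ (j * m) * expi (Y j)) j).
  by apply: eq_bigr => j _; rewrite !mxE.
case: (boolP (odd k == odd l)) => hp.
  transitivity (\sum_(j < n.*2) (w ^+ m) ^+ j).
    apply: eq_bigr => j _ /=; rewrite /Y (eqP hp) subrr expi0 mulr1 -exprM mulnC //.
  apply: geom0.
    rewrite -exprM mulnC exprM w2n expr1n //.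
  apply: wneq1; rewrite modn_small // -lt0n //.
have hodd : odd m by rewrite /m oddB ?(ltnW lk) // -negb_eqb.
rewrite (sum_halves (fun j : nat => w ^+ (j * m) * expi (Y j))).
apply: big1 => t _.
have -> : Y (t + n)%N = Y t by rewrite /Y XD.
rewrite mulnDl exprD (exprM w n m) wn -signr_odd hodd expr1 mulrN1 mulNr addrN //.
Qed.

End S.

Theorem mainTheorem10 (R : realType) (n : nat) (hn : (0 < n)%N) (xi : nat -> R) :
  is_complex_hadamard (hadamard_exp (fourier_mx R n.*2) (Rxi n xi)) /\
  is_complex_hadamard (hadamard_exp (fourier_mx R n.*2) (Rxi n xi)^T).
Proof.
split; split.
- by move=> j k; apply: had_norm.
- apply: orth_wlog => k l; exact: case1.
- by move=> j k; apply: had_norm.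
- apply: orth_wlog => k l; exact: case2.
Qed.
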